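(* For positive integers $d$ and $q$, $\hom(K_{d,d}, H_q) \leq 2q \cdot c_q^{2d}$.
   Context: $K_{d,d}$ is the complete bipartite graph with parts of size $d$. $H_q$ is the graph (loops allowed) on vertex set $\{1,\dots,q\}$ in which $u,v$ (possibly equal) are adjacent iff $u+v \geq q$. $\hom(G,H)$ is the number of graph homomorphisms from $G$ to $H$. For $q \geq 1$, $c_q := \sqrt{\lfloor (q+2)^2/4 \rfloor}$. *)

(* Defs.v *)
From mathcomp Require Import all_boot all_order all_algebra.
Set Implicit Arguments. Unset Strict Implicit. Unset Printing Implicit Defensive.
Import Order.TTheory GRing.Theory Num.Theory.

(* A graph (loops allowed) on a finite vertex type V is given by a
   symmetric edge relation e : rel V. *)

Definition hom_count (V W : finType) (G : rel V) (H : rel W) : nat :=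
  #|[set f : {ffun V -> W} | [forall x, forall y, G x y ==> H (f x) (f y)]]|.

Arguments hom_count : clear implicits.
Definition Kdd_rel (d : nat) : rel ('I_d + 'I_d) :=
  fun u v => match u, v with
             | inl _, inr _ | inr _, inl _ => true
             | _, _ => false
             end.

(* H_q: vertex set {1,...,q}, encoded as 'I_q with i : 'I_q standing for
   i+1; u ~ v (possibly equal) iff u + v >= q. *)
Definition Hq_rel (q : nat) : rel 'I_q :=
  fun i j => (q <= i.+1 + j.+1)%N.

Definition c_q (R : rcfType) (q : nat) : R :=
  Num.sqrt (((q + 2) ^ 2 %/ 4)%N)%:R.
Arguments Kdd_rel d : clear implicits.
Arguments Hq_rel q : clear implicits.

(* Main.v *)
Require Import Defs.
From mathcomp Require Import all_boot all_order all_algebra zify.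
Import Order.TTheory GRing.Theory Num.Theory.

Lemma card_ge (q k : nat) : #|[pred u : 'I_q | k <= u]| = q - k.
Proof.
rewrite -sum1_card big_mkcond /= -(big_mkord xpredT (fun i => if k <= i then 1 else 0)).
elim: q => [|q IH]; first by rewrite big_geq.
rewrite big_nat_recr //= IH; case: leqP => H. all: lia.
Qed.

Definition Fam (d q : nat) (a : nat) : forall x : 'I_d + 'I_d, pred 'I_q :=
  fun x => match x with
           | inl _ => [pred u : 'I_q | a <= u]
           | inr _ => [pred v : 'I_q | q - a.+2 <= v] end.

Lemma card_fam (d q a : nat) : (
  #|(family (Fam d q a) : simpl_pred {ffun ('I_d + 'I_d)%type -> 'I_q})| = muln (q - a) (q - (q - a.+2)) ^ d)%N.
Proof.
rewrite card_family foldrE big_map big_enum /= big_sumType /=.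
rewrite !card_ge !prod_nat_const !card_ord expnMn //.
Qed.

Lemma prod_bound (q a : nat) : a < q ->
  muln (q - a) (q - (q - a.+2)) <= (q + 2) ^ 2 %/ 4.
Proof.
move=> aq; rewrite leq_divRL //.
have h1 : q - (q - a.+2) <= a.+2 by lia.
set u := q - a. set w := q - (q - a.+2).
have hu : u + w <= q + 2 by rewrite /u /w; lia.
clearbody u w; have : 4 * (u * w) <= (u + w) ^ 2 by rewrite expnS expn1; case: (leqP u w) => hw; nia.
move=> h; apply: (leq_trans _ (leq_trans h _)); first by rewrite mulnC.
by rewrite leq_exp2r.
Qed.

Lemma hom_bound (d q : nat) (hd : 0 < d) :
  hom_count _ _ (Kdd_rel d) (Hq_rel q) <= \sum_(a < q) #|(family (Fam d q a) : simpl_pred {ffun ('I_d + 'I_d)%type -> 'I_q})|.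
Proof.
rewrite /hom_count -sum1_card.
set S := [set f : {ffun ('I_d + 'I_d)%type -> 'I_q} | _].
apply: (@leq_trans (\sum_(f in S) \sum_(a<q) ((f \in family (Fam d q a)) : nat))).
  apply: leq_sum => f; rewrite inE => /forallP fS.
  pose xm := [arg min_(x < Ordinal hd) f (inl x)].
  have fam : f \in family (Fam d q (f (inl xm))).
    apply/familyP => -[x|y] /=; rewrite inE.
      rewrite /xm; case: arg_minnP => // i _ H; exact: H.
    have /forallP /(_ (inr y)) := fS (inl xm).
    rewrite /= /Hq_rel => h; lia.
  by rewrite (bigD1 (f (inl xm))) //= fam.
rewrite exchange_big /=; apply: leq_sum => a _.
rewrite -sum1_card big_mkcond /= [X in _ <= X]big_mkcond /=.
apply: leq_sum => f _; case: (f \in S); case: (f \in _) => //.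
Qed.

Lemma hom_nat (d q : nat) (hd : 0 < d) :
  hom_count _ _ (Kdd_rel d) (Hq_rel q) <= 2 * q * ((q + 2) ^ 2 %/ 4) ^ d.
Proof.
apply: leq_trans (hom_bound d q hd) _.
apply: (@leq_trans (\sum_(a < q) ((q + 2) ^ 2 %/ 4) ^ d)).
  apply: leq_sum => a _; rewrite card_fam leq_exp2r //; exact: prod_bound.
rewrite sum_nat_const card_ord -mulnA leq_pmull //.
Qed.

Local Open Scope ring_scope.

Theorem lemma3p5 (R : rcfType) (d q : nat) (hd : (0 < d)%N) (hq : (0 < q)%N) :
  ((hom_count _ _ (Kdd_rel d) (Hq_rel q))%:R : R) <= 2 * q%:R * (c_q R q) ^+ (2 * d).
Proof.
rewrite exprM /c_q sqr_sqrtr ?ler0n // -natrX -(natrM R 2 q) -natrM ler_nat.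
exact: hom_nat.
Qed.
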